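(* Let $\{B^i\}_{i=1}^N$ be complex $n\times n$ matrices and $L\in\mathbb N$. If both $\{B^{i_1}\cdots B^{i_L}:\sum_{k}|i_k|\equiv0\pmod 2\}$ and $\{B^{i_1}\cdots B^{i_L}:\sum_k|i_k|\equiv1\pmod2\}$ span $\mathrm M_n(\mathbb C)$ as vector spaces, then both $\{B^{i_1}\cdots B^{i_{L+1}}:\sum_{k}|i_k|\equiv0\}$ and $\{B^{i_1}\cdots B^{i_{L+1}}:\sum_k|i_k|\equiv1\}$ span $\mathrm M_n(\mathbb C)$.
   Context: $i\mapsto|i|\in\{0,1\}$ is a fixed parity function on $\{1,\dots,N\}$. *)

(* Defs.v *)
(* complex numbers are (complex R) = R[i] for R : realType. *)
From HB Require Import structures.
From mathcomp Require Import all_boot all_order all_algebra.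
From mathcomp Require Import complex.
From mathcomp Require Import reals.
Set Implicit Arguments. Unset Strict Implicit. Unset Printing Implicit Defensive.
Import Order.TTheory GRing.Theory Num.Theory.
Local Open Scope ring_scope.

Definition wordprod (F : pzRingType) (n N L : nat) (B : 'I_N -> 'M[F]_n)
  (w : {ffun 'I_L -> 'I_N}) : 'M[F]_n :=
  \prod_(k < L) B (w k).

(* total parity weight sum_k |w_k| (as a natural number) *)
Definition wordweight (N L : nat) (par : 'I_N -> bool) (w : {ffun 'I_L -> 'I_N}) : nat :=
  (\sum_(k < L) (par (w k) : nat))%N.

Definition parspan (F : fieldType) (n N L : nat) (B : 'I_N -> 'M[F]_n)
  (par : 'I_N -> bool) (b : bool) : {vspace 'M[F]_n} :=
  (<< [seq wordprod B w | w in [pred w : {ffun 'I_L -> 'I_N} | odd (wordweight par w) == b]] >>)%VS.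

(* Main.v *)
Require Import Defs.
From HB Require Import structures.
From mathcomp Require Import all_boot all_order all_algebra.
From mathcomp Require Import complex.
From mathcomp Require Import reals.
Import Order.TTheory GRing.Theory Num.Theory.
Local Open Scope ring_scope.

Section Aux.
Variables (F : fieldType) (n N : nat) (par : 'I_N -> bool) (B : 'I_N -> 'M[F]_n).

Lemma span_lin (X : seq 'M[F]_n) (U : {vspace 'M[F]_n}) (f : {linear 'M[F]_n -> 'M[F]_n}) :
  (forall x, x \in X -> f x \in U) -> forall y, y \in <<X>>%VS -> f y \in U.
Proof.
move=> H y /(@coord_span _ _ _ (in_tuple X)) ->.
rewrite linear_sum; apply: memv_suml => i _; rewrite linearZ; apply: memvZ.
by apply: H; apply: mem_nth.
Qed.

Lemma gen_mem L b (w : {ffun 'I_L -> 'I_N}) :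
  odd (wordweight par w) == b -> wordprod B w \in parspan L B par b.
Proof. by move=> h; apply: memv_span; apply/imageP; exists w. Qed.

Lemma lemA L c i X : X \in parspan L B par c ->
  B i *m X \in parspan L.+1 B par (par i (+) c).
Proof.
move=> HX; apply: (@span_lin _ _ (mulmx (B i))) HX => x /imageP [w hw ->] /=.
set w' : {ffun 'I_L.+1 -> 'I_N} :=
  [ffun k => if unlift ord0 k is Some k' then w k' else i].
have -> : B i *m wordprod B w = wordprod B w'.
  rewrite /wordprod big_ord_recl mulmxE /w' ffunE unlift_none; congr (_ * _).
  by apply: eq_bigr => k _; rewrite ffunE liftK.
apply: gen_mem; rewrite /wordweight big_ord_recl /w' ffunE unlift_none.
rewrite (eq_bigr (fun k => (par (w k) : nat))); last by move=> k _; rewrite ffunE liftK.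
rewrite oddD oddb; move: hw; rewrite inE => /eqP ->; by [].
Qed.

Lemma main_gen L :
  parspan L B par false = fullv -> parspan L B par true = fullv ->
  forall b, parspan L.+1 B par b = fullv.
Proof.
move=> H0 H1 b; apply/eqP; rewrite eqEsubv subvf /=; apply/subvP => M _.
case: L H0 H1 => [|L] H0 H1.
  have Hz : (parspan 0 B par true <= 0)%VS.
    apply/span_subvP => x /imageP [w hw _]; move: hw.
    by rewrite inE /wordweight big_ord0.
  have : M \in (0 : {vspace 'M[F]_n})%VS by apply: (subvP Hz); rewrite H1 memvf.
  by rewrite memv0 => /eqP ->; rewrite mem0v.
have h1 : (1 : 'M[F]_n) \in parspan L.+1 B par false by rewrite H0 memvf.
rewrite -(mul1mx M).
apply: (@span_lin _ _ (mulmxr M)) h1 => x /imageP [w _ ->] /=.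
rewrite /wordprod big_ord_recl -mulmxE -mulmxA.
set Y := _ *m M.
have HY : Y \in parspan L.+1 B par (par (w ord0) (+) b).
  by case: (par (w ord0) (+) b); rewrite ?H0 ?H1 memvf.
by have := lemA _ _ (w ord0) _ HY; rewrite addbA addbb.
Qed.
End Aux.

Theorem mainTheorem5 (R : realType) (n N L : nat) (par : 'I_N -> bool)
  (B : 'I_N -> 'M[R[i]]_n) :
  parspan L B par false = fullv ->
  parspan L B par true = fullv ->
  parspan L.+1 B par false = fullv /\ parspan L.+1 B par true = fullv.
Proof.
by move=> H0 H1; split; apply: main_gen.
Qed.
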